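(* Let $Q=\prod_{n\in\mathbb{Z}}[0,1]$ with the metric $D(\hat t,\hat s)=\sum_{n\in\mathbb{Z}}|t_n-s_n|/2^{|n|}$ and let $\sigma:Q\to Q$ be the shift map. Let $a=(\dots,0,0,0,\dots)$ and, for $n\in\mathbb{Z}$ and $p\in\{1,2,\dots\}$, let $b^p_n\in Q$ be the sequence whose $n$-th coordinate is $1/p$ and all other coordinates are $0$. Let $S_Q=\{a\}\cup\{b^p_n: n\in\mathbb{Z},\ p\ge 1\}$ (a closed $\sigma$-invariant subset) and $\sigma_{S_Q}=\sigma|_{S_Q}$. Then $h(\sigma_{S_Q})=0$ but $h(2^{\sigma_{S_Q}})=\infty$.
   Context: $2^{S_Q}$ is the hyperspace of nonempty closed subsets of $S_Q$ with the Hausdorff metric and $2^{\sigma_{S_Q}}(A)=\sigma(A)$. $h$ denotes topological entropy. *)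

(* Defs.v *)
From Stdlib Require List.
From HB Require Import structures.
From mathcomp Require Import all_boot all_order all_algebra.
From mathcomp Require Import all_classical all_reals all_analysis.
Set Implicit Arguments. Unset Strict Implicit. Unset Printing Implicit Defensive.
Import Order.TTheory GRing.Theory Num.Theory.
Import numFieldNormedType.Exports.
Local Open Scope classical_set_scope.
Local Open Scope ring_scope.

Section Entropy.
Variables (R : realType) (T : Type).

Definition separated (X : set T) (d : T -> T -> R) (f : T -> T)
    (n : nat) (eps : R) (E : seq T) : Prop :=
  List.NoDup E /\ (forall x, List.In x E -> X x) /\
  (forall x y, List.In x E -> List.In y E -> x <> y ->
     exists2 i : nat, (i < n)%N & eps < d (iter i f x) (iter i f y)).

Definition sep_number (X : set T) (d : T -> T -> R) (f : T -> T)
    (n : nat) (eps : R) : \bar R :=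
  ereal_sup [set ((size E)%:R)%:E | E in separated X d f n eps].

Definition growth_term (X : set T) (d : T -> T -> R) (f : T -> T)
    (eps : R) (n : nat) : \bar R :=
  match sep_number X d f n eps with
  | EFin r => (ln r / n%:R)%:E
  | _ => +oo%E
  end.

Definition top_entropy (X : set T) (d : T -> T -> R) (f : T -> T) : \bar R :=
  ereal_sup [set limn_esup (growth_term X d f eps) | eps in [set e : R | 0 < e]].

Definition closed_in (X : set T) (d : T -> T -> R) (A : set T) : Prop :=
  A `<=` X /\
  forall x, X x -> (forall e : R, 0 < e -> exists2 y, A y & d x y < e) -> A x.

Definition hausdorff (d : T -> T -> R) (A B : set T) : R :=
  fine (maxe
    (ereal_sup [set ereal_inf [set (d a b)%:E | b in B] | a in A])
    (ereal_sup [set ereal_inf [set (d a b)%:E | a in A] | b in B])).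

Definition hyperspace (X : set T) (d : T -> T -> R) : set (set T) :=
  [set A | closed_in X d A /\ A !=set0].

End Entropy.

Section Hilbert.
Variable R : realType.

Definition Qspace : set (int -> R) := [set t | forall n, 0 <= t n <= 1].

Definition Dmetric (t s : int -> R) : R :=
  fine (\esum_(n in [set: int]) (`|t n - s n| / 2 ^+ `|n|%N)%:E).

Definition Qshift (t : int -> R) : int -> R := fun n => t (n + 1).

Definition pt_a : int -> R := fun _ => 0.

Definition pt_b (p : nat) (n : int) : int -> R :=
  fun m => if m == n then p%:R^-1 else 0.

Definition S_Q : set (int -> R) :=
  [set pt_a] `|` [set x | exists (n : int) (p : nat), (0 < p)%N /\ x = pt_b p n].

End Hilbert.

(* Main.v *)
Require Import Defs.
From HB Require Import structures.
From mathcomp Require Import all_boot all_order all_algebra.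
From mathcomp Require Import all_classical all_reals all_analysis.
From mathcomp Require Import zify ring lra.
From Stdlib Require Import Classical.
Set Implicit Arguments. Unset Strict Implicit. Unset Printing Implicit Defensive.
Import Order.TTheory GRing.Theory Num.Theory.
Local Open Scope classical_set_scope.
Local Open Scope ring_scope.

Section G.
Variable R : realType.

Lemma limsup_ge (u : nat -> \bar R) c :
  (exists N, forall n, (N <= n)%N -> (c <= u n)%E) -> (c <= limn_esup u)%E.
Proof.
move=> [N HN]; rewrite /limn_esup /limf_esup.
apply: le_ereal_inf_tmp => _ [V [M _ HM] <-].
apply: le_trans (HN (maxn N M) (leq_maxl _ _)) _.
by apply: ereal_sup_ubound; exists (maxn N M) => //; apply: HM; rewrite /= leq_maxr.
Qed.

Lemma limsup_eq0 (u : nat -> \bar R) : (forall n, (0 <= u n)%E) ->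
  (forall d : R, 0 < d -> exists N, forall n, (N <= n)%N -> (u n <= d%:E)%E) ->
  limn_esup u = 0%E.
Proof.
move=> u0 H; apply/eqP; rewrite eq_le; apply/andP; split; last first.
  by apply: limsup_ge; exists 0%N.
apply/lee_addgt0Pr => d d0; rewrite add0e.
have [N HN] := H d d0.
apply: (@le_trans _ _ (ereal_sup (u @` [set n | (N <= n)%N]))).
  apply: ereal_inf_lbound; exists [set n | (N <= n)%N] => //; by exists N.
by apply: ge_ereal_sup => _ [n Hn <-]; exact: HN.
Qed.

Lemma In_mem (T : eqType) (x : T) s : List.In x s -> x \in s.
Proof.
elim: s => //= y s IH [->|/IH H]; rewrite inE; first by rewrite eqxx.
by rewrite H orbT.
Qed.

Lemma NoDup_map_uniq (T : eqType) U (f : T -> U) (s : seq T) :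
  injective f -> uniq s -> List.NoDup (map f s).
Proof.
move=> fi; elim: s => [|x s IH] /=; first by constructor.
move=> /andP[xs us]; constructor; last exact: IH.
move=> /List.in_map_iff [y [/fi e ys]]; subst y.
by move: xs; rewrite (@In_mem _ _ _ ys).
Qed.

Lemma count_bound (T : Type) (E : seq T) (Rel : T -> nat -> Prop) (B : nat) :
  List.NoDup E ->
  (forall x, List.In x E -> exists c, (c < B)%N /\ Rel x c) ->
  (forall x y c, List.In x E -> List.In y E -> Rel x c -> Rel y c -> x = y) ->
  (size E <= B)%N.
Proof.
move=> nd ex un.
suff [s [ss [us Hs]]] : exists s : seq nat, size s = size E /\ uniq s /\
    (forall c, c \in s -> (c < B)%N /\ exists y, List.In y E /\ Rel y c).
  rewrite -ss -(size_iota 0 B); apply: uniq_leq_size => // c /Hs [cB _].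
  by rewrite mem_iota add0n cB.
elim: E nd ex un => [|x E IH] nd ex un; first by exists [::].
inversion nd as [|x' E' xE ndE]; subst.
have [s [ss [us Hs]]] : exists s : seq nat, size s = size E /\ uniq s /\
    (forall c, c \in s -> (c < B)%N /\ exists y, List.In y E /\ Rel y c).
  apply: IH => //.
  - by move=> y yE; apply: ex; right.
  - by move=> y z c yE zE; apply: un; right.
have [c [cB Rc]] := ex x (or_introl erefl).
exists (c :: s); split; first by rewrite /= ss.
split.
  rewrite /= us andbT; apply/negP => /Hs [_ [y [yE Ry]]].
  have xy : x = y by apply: (un x y c) => //; [left|right].
  by subst y.
move=> c'; rewrite inE => /orP[/eqP ->|/Hs [c'B [y [yE Ry]]]].
  by split => //; exists x; split => //; left.
by split => //; exists y; split => //; right.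
Qed.

End G.

Section S.
Variable R : realType.
Local Notation b := (@pt_b R).
Local Notation a := (@pt_a R).
Local Notation D := (@Dmetric R).

Lemma esum_single (g : int -> R) m : (forall n, n != m -> g n = 0) -> 0 <= g m ->
  \esum_(n in [set: int]) (g n)%:E = (g m)%:E.
Proof.
move=> g0 gm; rewrite -(@esum_set1 _ _ m (fun n => (g n)%:E)) ?lee_fin //.
rewrite [RHS]esum_mkcond; apply: eq_esum => n _.
case: (eqVneq n m) => [->|nm]; first by rewrite mem_set.
rewrite g0 // ifF //; apply/negbTE; apply/negP => /set_mem /= /eqP; by rewrite (negbTE nm).
Qed.

Lemma pt_bE p m n : b p m n = if n == m then p%:R^-1 else 0 :> R.
Proof. by []. Qed.

Lemma D_ab p m : D a (b p m) = p%:R^-1 / 2 ^+ `|m|%N.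
Proof.
rewrite /Dmetric (@esum_single _ m) //=.
- by rewrite /pt_a pt_bE eqxx sub0r normrN ger0_norm.
- move=> n nm; by rewrite /pt_a pt_bE (negbTE nm) subr0 normr0 mul0r.
Qed.


Lemma D_ba p m : D (b p m) a = p%:R^-1 / 2 ^+ `|m|%N.
Proof.
rewrite /Dmetric (@esum_single _ m) //=.
- by rewrite /pt_a pt_bE eqxx subr0 ger0_norm.
- move=> n nm; by rewrite /pt_a pt_bE (negbTE nm) subr0 normr0 mul0r.
Qed.

Lemma D_aa : D a a = 0.
Proof.
rewrite /Dmetric (@esum_single _ 0) //=.
- by rewrite /pt_a subr0 normr0 mul0r.
- move=> n nm; by rewrite /pt_a subr0 normr0 mul0r.
Qed.

Lemma D_bb_eq p q m : D (b p m) (b q m) = `|p%:R^-1 - q%:R^-1| / 2 ^+ `|m|%N.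
Proof.
rewrite /Dmetric (@esum_single _ m) //=.
- by rewrite !pt_bE eqxx.
- move=> n nm; by rewrite !pt_bE (negbTE nm) subr0 normr0 mul0r.
Qed.

Lemma D_bb_neq p q m k : m != k ->
  D (b p m) (b q k) = p%:R^-1 / 2 ^+ `|m|%N + q%:R^-1 / 2 ^+ `|k|%N.
Proof.
move=> mk; rewrite /Dmetric.
rewrite (eq_esum (b := fun n => ((if n == m then p%:R^-1 / 2 ^+ `|m|%N else 0)%:E
   + (if n == k then q%:R^-1 / 2 ^+ `|k|%N else 0)%:E)%E)); last first.
  move=> n _; rewrite !pt_bE; case: (eqVneq n m) => [->|nm].
    by rewrite (negbTE mk) subr0 ger0_norm // addr0.
  case: (eqVneq n k) => [->|nk]; first by rewrite sub0r normrN ger0_norm // add0r.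
  by rewrite subr0 normr0 mul0r addr0.
rewrite esumD; last 2 first.
- by move=> n _; case: ifP.
- by move=> n _; case: ifP.
rewrite (@esum_single (fun n => if n == m then _ else 0) m) ?eqxx //; last by move=> n /negbTE ->.
rewrite (@esum_single (fun n => if n == k then _ else 0) k) ?eqxx //; last by move=> n /negbTE ->.
Qed.


Local Notation SQ := (@S_Q R).
Local Notation sh := (@Qshift R).

Lemma D_ge0 x y : 0 <= D x y.
Proof. by rewrite /Dmetric; apply: fine_ge0; apply: esum_ge0 => n _; rewrite lee_fin divr_ge0. Qed.

Lemma SQ_cases x : SQ x -> x = a \/ exists p m, (0 < p)%N /\ x = b p m.
Proof. case=> [->|[m [p [p0 ->]]]]; [by left|right; by exists p, m]. Qed.

Lemma Qshift_b p m : sh (b p m) = b p (m - 1).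
Proof.
apply/funext => n; rewrite /Qshift !pt_bE; congr (if _ then _ else _).
apply/eqP/eqP => H; lia.
Qed.

Lemma iter_b i p m : iter i sh (b p m) = b p (m - Posz i).
Proof.
elim: i => [|i IH]; first by rewrite subr0.
rewrite iterS IH Qshift_b; congr (b p _); lia.
Qed.

Lemma iter_a i : iter i sh a = a.
Proof. by elim: i => // i IH; rewrite iterS IH. Qed.

Lemma SQ_b p m : (0 < p)%N -> SQ (b p m).
Proof. by move=> p0; right; exists m, p. Qed.

Lemma SQ_a : SQ a.
Proof. by left. Qed.

Lemma iter_SQ i x : SQ x -> SQ (iter i sh x).
Proof.
case/SQ_cases=> [->|[p [m [p0 ->]]]]; first by rewrite iter_a; exact: SQ_a.
by rewrite iter_b; exact: SQ_b.
Qed.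

Lemma N_b_le p m : (0 < p)%N -> p%:R^-1 / 2 ^+ `|m|%N <= 1 :> R.
Proof.
move=> p0; rewrite ler_pdivrMr ?exprn_gt0 // mul1r.
have h1 : (p%:R : R)^-1 <= 1 by rewrite invf_le1 ?ltr0n // ler1n.
have h2 : (1 : R) <= 2 ^+ `|m|%N by rewrite exprn_ege1 // ler1n.
exact: le_trans h1 h2.
Qed.

Lemma N_le1 x : SQ x -> D x a <= 1.
Proof.
case/SQ_cases=> [->|[p [m [p0 ->]]]]; first by rewrite D_aa.
by rewrite D_ba N_b_le.
Qed.

Lemma Dle x y : SQ x -> SQ y -> D x y <= D x a + D y a.
Proof.
case/SQ_cases=> [->|[p [m [p0 ->]]]]; case/SQ_cases=> [->|[q [k [q0 ->]]]].
- by rewrite D_aa addr0.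
- by rewrite D_ab D_aa D_ba add0r.
- by rewrite D_ba D_aa addr0.
- rewrite !D_ba; case: (eqVneq m k) => [<-|mk]; last by rewrite D_bb_neq.
  rewrite D_bb_eq -mulrDl ler_wpM2r ?invr_ge0 ?exprn_ge0 //.
  by rewrite (le_trans (ler_normB _ _)) // !ger0_norm.
Qed.

Lemma inv_sep (p q : nat) : (0 < p)%N -> (0 < q)%N -> p != q ->
  (p%:R * q%:R)^-1 <= `|p%:R^-1 - q%:R^-1| :> R.
Proof.
wlog pq : p q / (p < q)%N.
  move=> W p0 q0 npq; case: (ltngtP p q) => [pq|qp|e]; first exact: W.
    by rewrite mulrC distrC W // eq_sym.
  by rewrite e eqxx in npq.
move=> p0 q0 _.
have x0 : (0 : R) < p%:R by rewrite ltr0n.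
have y0 : (0 : R) < q%:R by rewrite ltr0n.
have xy : (p%:R : R) + 1 <= q%:R by rewrite natr1 ler_nat.
have -> : (p%:R^-1 - q%:R^-1 : R) = (q%:R - p%:R) * (p%:R * q%:R)^-1.
  by field; apply/andP; split; apply: lt0r_neq0.
rewrite ger0_norm; last first.
  apply: mulr_ge0; last by rewrite invr_ge0 mulr_ge0 ?ltW.
  lra.
rewrite -{1}(mul1r (_^-1)); apply: ler_wpM2r; last lra.
by rewrite invr_ge0 mulr_ge0 ?ltW.
Qed.

End S.

Section P2.
Variable R : realType.
Local Notation b := (@pt_b R).
Local Notation a := (@pt_a R).
Local Notation D := (@Dmetric R).
Local Notation SQ := (@S_Q R).
Local Notation sh := (@Qshift R).
Local Notation F := (fun A : set (int -> R) => sh @` A).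

Lemma b_inj p q m l : (0 < p)%N -> b p m = b q l -> p = q /\ m = l.
Proof.
move=> p0 e; have := congr1 (fun f => f m) e; rewrite !pt_bE eqxx.
case: eqVneq => [ml|ml] E.
  split => //; move/invr_inj: E => /eqP; rewrite eqr_nat => /eqP //.
by move/eqP: E; rewrite invr_eq0 pnatr_eq0 => /eqP p00; rewrite p00 in p0.
Qed.
Lemma dummy_b : True. Proof. by [].
Qed.

Lemma iterF i (A : set (int -> R)) : iter i F A = (iter i sh) @` A.
Proof.
elim: i => [|i IH] /=.
  by rewrite predeqE => x; split => [Ax|[y Ay <-]] //; exists x.
rewrite IH -image_comp; congr (_ @` _); apply/funext => x /=; by rewrite iterS.
Qed.

Lemma D_le2 x y : SQ x -> SQ y -> D x y <= 2.
Proof.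
move=> Sx Sy; apply: le_trans (Dle Sx Sy) _.
by rewrite -[2]/(1 + 1); apply: lerD; apply: N_le1.
Qed.

Lemma haus_lb (X Y : set (int -> R)) x0 y0 c : X `<=` SQ -> Y `<=` SQ ->
  X x0 -> Y y0 -> 0 <= c -> (forall y, Y y -> c <= D x0 y) ->
  c <= hausdorff D X Y.
Proof.
move=> XS YS Xx0 Yy0 c0 H; rewrite /hausdorff.
set s1 := ereal_sup _; set s2 := ereal_sup _.
have h1 : (c%:E <= s1)%E.
  apply: (@le_trans _ _ (ereal_inf [set (D x0 y)%:E | y in Y])).
    by apply: le_ereal_inf_tmp => _ [y Yy <-]; rewrite lee_fin H.
  by apply: ereal_sup_ubound; exists x0.
have h2 : (s1 <= 2%:E)%E.
  apply: ge_ereal_sup => _ [x Xx <-].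
  apply: le_trans (ereal_inf_lbound _) _; first by exists y0.
  by rewrite lee_fin D_le2 //; [apply: XS|apply: YS].
have h3 : (s2 <= 2%:E)%E.
  apply: ge_ereal_sup => _ [y Yy <-].
  apply: le_trans (ereal_inf_lbound _) _; first by exists x0.
  by rewrite lee_fin D_le2 //; [apply: XS|apply: YS].
have hM1 : (c%:E <= maxe s1 s2)%E by rewrite le_max h1.
have hM2 : (maxe s1 s2 <= 2%:E)%E by rewrite ge_max h2 h3.
have Mf : maxe s1 s2 \is a fin_num.
  rewrite ge0_fin_numE; last by apply: le_trans hM1; rewrite lee_fin.
  by apply: le_lt_trans hM2 _; rewrite ltry.
by rewrite -lee_fin fineK.
Qed.


Definition Aw n k (w : {ffun 'I_n -> 'I_k.+1}) : set (int -> R) :=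
  [set x | exists j : 'I_n, x = b (w j).+1 (Posz j)].

Lemma Aw_SQ n k (w : {ffun 'I_n -> 'I_k.+1}) : Aw w `<=` SQ.
Proof. by move=> x [j ->]; apply: SQ_b. Qed.

Lemma Aw_inj n k : injective (@Aw n k).
Proof.
move=> w w' E; apply/ffunP => j.
have : Aw w' (b (w j).+1 (Posz j)) by rewrite -E; exists j.
case=> l e; have [e1 e2] := b_inj (ltn0Sn _) e.
have jl : j = l by apply: val_inj; case: e2.
by subst l; apply: val_inj; case: e1.
Qed.

Lemma Aw_iter n k (w : {ffun 'I_n -> 'I_k.+1}) i :
  iter i F (Aw w) = [set x | exists j : 'I_n, x = b (w j).+1 (Posz j - Posz i)].
Proof.
rewrite iterF predeqE => x; split => [[y [j ->] <-]|[j ->]].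
  by exists j; rewrite iter_b.
by exists (b (w j).+1 j); [exists j|rewrite iter_b].
Qed.

Lemma Aw_hyper n k (w : {ffun 'I_n -> 'I_k.+1}) : (0 < n)%N -> hyperspace SQ D (Aw w).
Proof.
move=> n0; split; last by exists (b (w (Ordinal n0)).+1 0); exists (Ordinal n0).
split; first exact: Aw_SQ.
move=> x Sx H; apply: NNPP => nA.
suff [e e0 He] : exists2 e : R, 0 < e & forall y, Aw w y -> e <= D x y.
  by have [y Ay] := H e e0; rewrite ltNge He.
case/SQ_cases: Sx nA H => [->|[q [m [q0 ->]]]] nA H.
  exists ((k.+1%:R * 2 ^+ n)^-1).
    by rewrite invr_gt0 mulr_gt0 ?ltr0n ?exprn_gt0.
  move=> _ [j ->]; rewrite D_ab /= invfM; apply: ler_pM.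
  - by rewrite invr_ge0.
  - by rewrite invr_ge0 exprn_ge0.
  - by rewrite lef_pV2 ?posrE ?ltr0n // ler_nat ltn_ord.
  - by rewrite lef_pV2 ?posrE ?exprn_gt0 // ler_eXn2l ?ltr1n // ltnW.
exists ((k.+1%:R * q%:R)^-1 / 2 ^+ `|m|%N).
  by rewrite divr_gt0 ?exprn_gt0 // invr_gt0 mulr_gt0 ?ltr0n.
move=> _ [j ->]; case: (eqVneq m (Posz j)) => [mj|mj].
  subst m; rewrite D_bb_eq; apply: ler_wpM2r; first by rewrite invr_ge0 exprn_ge0.
  have qp : q != (w j).+1.
    by apply/eqP => qp; apply: nA; exists j; rewrite qp.
  have := @inv_sep R q (w j).+1 q0 (ltn0Sn _) qp. move=> hh; apply: le_trans hh.
  rewrite -!natrM lef_pV2 ?posrE ?ltr0n ?muln_gt0 ?q0 // ler_nat mulnC leq_mul //.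
rewrite D_bb_neq // -[X in X <= _]addr0; apply: lerD; last first.
  by rewrite divr_ge0 ?exprn_ge0.
apply: ler_wpM2r; first by rewrite invr_ge0 exprn_ge0.
rewrite invfM -[X in _ <= X]mul1r; apply: ler_wpM2r; first by rewrite invr_ge0.
by rewrite invf_le1 ?ltr0n // ler1n.
Qed.

Lemma Aw_sep n k (w w' : {ffun 'I_n -> 'I_k.+1}) (j : 'I_n) : w j != w' j ->
  (k.+1%:R * k.+1%:R)^-1 <= hausdorff D (iter j F (Aw w)) (iter j F (Aw w')).
Proof.
move=> ww.
have XS : forall (v : {ffun 'I_n -> 'I_k.+1}), iter j F (Aw v) `<=` SQ.
  by move=> v x; rewrite Aw_iter => -[l ->]; apply: SQ_b.
apply: (@haus_lb _ _ (b (w j).+1 0) (b (w' j).+1 0)) => //.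
- by rewrite Aw_iter; exists j; rewrite subrr.
- by rewrite Aw_iter; exists j; rewrite subrr.
move=> y; rewrite Aw_iter => -[l ->].
case: (eqVneq (Posz l - Posz j) 0) => [lj|lj].
  have jl : l = j by apply: val_inj; move/eqP: lj; rewrite subr_eq0 => /eqP [].
  subst l; rewrite lj D_bb_eq expr0 divr1.
  apply: le_trans; last (apply: inv_sep => //; idtac).
  by rewrite -!natrM lef_pV2 ?posrE ?ltr0n ?muln_gt0 // ler_nat leq_mul.
rewrite D_bb_neq 1?eq_sym // expr0 divr1 -[X in X <= _]addr0; apply: lerD; last first.
  by rewrite divr_ge0 ?exprn_ge0.
rewrite -natrM lef_pV2 ?posrE ?ltr0n ?muln_gt0 // ler_nat.
by apply: leq_trans (leq_pmulr _ _) => //; rewrite ltnS.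
Qed.


Lemma sepnum_ge n k : (0 < n)%N ->
  (((k.+1 ^ n)%N%:R)%:E <= sep_number (hyperspace SQ D) (hausdorff D) F n
     ((k.+1%:R * k.+1%:R)^-1 / 2))%E.
Proof.
move=> n0; apply: ereal_sup_ubound.
exists (map (@Aw n k) (enum {ffun 'I_n -> 'I_k.+1})); last first.
  by rewrite size_map -cardE card_ffun !card_ord.
split; first exact: NoDup_map_uniq (@Aw_inj n k) (enum_uniq _).
split.
  by move=> x /List.in_map_iff [w [<- _]]; exact: Aw_hyper.
move=> x y /List.in_map_iff [w [<- _]] /List.in_map_iff [w' [<- _]] nxy.
have : ~ (forall j, w j = w' j) by move=> H; apply: nxy; congr Aw; apply/ffunP.
move=> /not_all_ex_not [j /eqP wj].
exists j => //; apply: lt_le_trans (Aw_sep wj).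
have c0 : 0 < (k.+1%:R * k.+1%:R : R)^-1 by rewrite invr_gt0 mulr_gt0 ?ltr0n.
set c := (_ ^-1) in c0 *. lra.
Qed.

Lemma growth_ge n k : (0 < n)%N ->
  ((ln k.+1%:R)%:E <= growth_term (hyperspace SQ D) (hausdorff D) F
     ((k.+1%:R * k.+1%:R)^-1 / 2) n)%E.
Proof.
move=> n0; have := sepnum_ge k n0; rewrite /growth_term.
case: sep_number => [r| |] H //; last by rewrite leey.
rewrite lee_fin in H; rewrite lee_fin ler_pdivlMr ?ltr0n //.
have r0 : 0 < r by apply: lt_le_trans H; rewrite ltr0n expn_gt0.
rewrite mulr_natr -lnXn ?ltr0n // -natrX ler_ln // ?posrE ?ltr0n ?expn_gt0 //.
Qed.

Lemma part2 : top_entropy (hyperspace SQ D) (hausdorff D) F = +oo%E.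
Proof.
apply: eq_infty => r.
set k := Num.Def.archi_bound (expR r).
have hk : expR r < k%:R := archi_boundP (expR_ge0 r).
have hr : r <= ln k.+1%:R.
  rewrite -{1}(expRK r) ler_ln ?posrE ?expR_gt0 ?ltr0n //.
  by apply: le_trans (ltW hk) _; rewrite ler_nat.
apply: (@le_trans _ _ (ln k.+1%:R)%:E); first by rewrite lee_fin.
apply: (@le_trans _ _ (limn_esup (growth_term (hyperspace SQ D) (hausdorff D) F
     ((k.+1%:R * k.+1%:R)^-1 / 2)))).
  by apply: limsup_ge; exists 1%N => n n1; exact: growth_ge.
apply: ereal_sup_ubound; exists ((k.+1%:R * k.+1%:R)^-1 / 2) => //.
by rewrite /= divr_gt0 // invr_gt0 mulr_gt0 ?ltr0n.
Qed.

End P2.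

Section P1.
Variable R : realType.
Local Notation b := (@pt_b R).
Local Notation a := (@pt_a R).
Local Notation D := (@Dmetric R).
Local Notation SQ := (@S_Q R).
Local Notation sh := (@Qshift R).

Lemma divmod_uniq (M p q j j' : nat) : (p < M)%N -> (q < M)%N ->
  (1 + p + M * j = 1 + q + M * j')%N -> p = q /\ j = j'.
Proof.
move=> pM qM e.
have e2 : (j * M + p = j' * M + q)%N by rewrite mulnC [(j' * M)%N]mulnC; lia.
have hp : p = q.
  by have := congr1 (modn^~ M) e2; rewrite /= !modnMDl !modn_small.
subst q; split => //; apply/eqP; rewrite -(@eqn_pmul2r M); last by lia.
by apply/eqP; lia.
Qed.

Lemma ln_growth (C : nat) (d : R) : 0 < d ->
  exists N, forall m, (N <= m)%N -> ln ((C.+1 * m.+1)%N%:R) <= d * m%:R.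
Proof.
move=> d0.
have K0 : 0 <= 4 * C.+1%:R / d ^+ 2 by rewrite divr_ge0 ?mulr_ge0 ?exprn_ge0 ?ltW.
exists (Num.Def.archi_bound (4 * C.+1%:R / d ^+ 2)).+1 => m hm.
have hK := archi_boundP K0.
have hmK : 4 * C.+1%:R / d ^+ 2 < m%:R.
  by apply: lt_le_trans hK _; rewrite ler_nat; apply: ltnW.
have m1 : (1 : R) <= m%:R by rewrite ler1n; apply: leq_trans hm.
have dm0 : 0 <= d * m%:R by rewrite mulr_ge0 // ltW.
rewrite -(expRK (d * m%:R)) ler_ln ?posrE ?expR_gt0 ?ltr0n ?muln_gt0 //.
apply: le_trans (expR_ge1Dxn 1 dm0).
have h1 : 4 * C.+1%:R <= d ^+ 2 * m%:R.
  by move: hmK; rewrite ltr_pdivrMr ?exprn_gt0 // => h; rewrite [d ^+ 2 * _]mulrC ltW.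
have h2 : 4 * C.+1%:R * m%:R <= d ^+ 2 * m%:R * m%:R.
  by apply: ler_wpM2r => //; apply: le_trans m1.
have -> : (2`!%:R : R) = 2 by [].
have -> : (d * m%:R) ^+ 2 = d ^+ 2 * m%:R * m%:R by rewrite exprMn expr2 mulrA.
have fin : forall (c y z : R), 1 <= c -> 1 <= y -> 4 * c * y <= z ->
    c * (y + 1) <= 1 + z / 2 by move=> c y z *; nra.
rewrite natrM -[(m.+1)%:R]natr1; apply: fin => //; by rewrite ler1n.
Qed.

Section Eps.
Variable eps : R.
Hypothesis eps0 : 0 < eps.

Definition Mb := Num.Def.archi_bound (2 / eps).

Lemma Mb_gt : 2 / eps < Mb%:R.
Proof. by apply: archi_boundP; rewrite divr_ge0 // ltW. Qed.

Definition small n x := forall i, (i < n)%N -> D (iter i sh x) a <= eps / 2.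

Lemma small_pair n x y i : SQ x -> SQ y -> small n x -> small n y -> (i < n)%N ->
  D (iter i sh x) (iter i sh y) <= eps.
Proof.
move=> Sx Sy sx sy hi.
apply: le_trans (Dle (iter_SQ i Sx) (iter_SQ i Sy)) _.
have := sx i hi; have := sy i hi; lra.
Qed.

Lemma nonsmall n x : SQ x -> ~ small n x -> exists p m, x = b p m /\ (0 < p)%N /\
  (p < Mb)%N /\ 0 <= m + Posz Mb /\ (absz (m + Posz Mb)%R < n + 2 * Mb)%N.
Proof.
case/SQ_cases => [->|[p [m [p0 ->]]]] ns.
  exfalso; apply: ns => i _; rewrite iter_a D_aa divr_ge0 // ltW //.
have [i Hi] := not_all_ex_not _ _ ns.
have [hin /negP hlt] := imply_to_and _ _ Hi.
rewrite -ltNge iter_b D_ba in hlt.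
set d := `|m - Posz i|%N in hlt.
have P0 : (0:R) < (p * 2 ^ d)%N%:R by rewrite ltr0n muln_gt0 p0 expn_gt0.
have e1 : p%:R^-1 / 2 ^+ d = ((p * 2 ^ d)%N%:R)^-1 :> R by rewrite natrM natrX invfM.
rewrite e1 in hlt.
have key : ((p * 2 ^ d)%N%:R : R) < Mb%:R.
  apply: lt_trans Mb_gt.
  have := hlt; rewrite -[eps / 2]invf_div ltf_pV2 ?posrE //.
  by rewrite divr_gt0.
move: key; rewrite ltr_nat => key.
have h2 : (0 < 2 ^ d)%N := expn_gt0 2 d.
have dl : (d < 2 ^ d)%N := ltn_expl d (isT : (1 < 2)%N).
have pM : (p < Mb)%N by nia.
have dM : (d < Mb)%N by nia.
exists p, m; rewrite /d in dM; do !split => //; lia.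
Qed.

Lemma sep_size n E : Defs.separated SQ D sh n eps E -> (size E <= 1 + Mb * (n + 2 * Mb))%N.
Proof.
move=> [nd [inX sepE]].
apply: (@count_bound _ E (fun x c => (small n x /\ c = 0%N) \/
   exists p m, x = b p m /\ (0 < p)%N /\ (p < Mb)%N /\ 0 <= m + Posz Mb /\
   c = (1 + p + Mb * absz (m + Posz Mb)%R)%N)) => //.
- move=> x xE; case: (pselect (small n x)) => sx.
    by exists 0%N; split; [rewrite add1n|left].
  have [p [m [-> [p0 [pM [mM jB]]]]]] := nonsmall (inX x xE) sx.
  exists (1 + p + Mb * absz (m + Posz Mb)%R)%N; split; first nia.
  by right; exists p, m.
- move=> x y c xE yE [[sx ->]|[p [m [ex [p0 [pM [mM ->]]]]]]]
    [[sy c0]|[q [l [ey [q0 [qM [lM e]]]]]]].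
  + apply: NNPP => nxy; have [i hi hlt] := sepE x y xE yE nxy.
    have := small_pair (inX x xE) (inX y yE) sx sy hi.
    by rewrite leNgt hlt.
  + by move: e; rewrite add1n.
  + by move: c0; rewrite add1n.
  + have [pq jj] := divmod_uniq pM qM e.
    have ml : m = l by lia.
    by rewrite ex ey pq ml.
Qed.

Lemma sepnum_bounds n : exists r, sep_number SQ D sh n eps = r%:E /\ 1 <= r /\
  r <= (1 + Mb * (n + 2 * Mb))%N%:R.
Proof.
have lb : (1%:E <= sep_number SQ D sh n eps)%E.
  apply: ereal_sup_ubound; exists [:: a] => //.
  split; first by constructor; [by []|constructor].
  split; first by move=> x [<-|[]]; exact: SQ_a.
  by move=> x y [<-|[]] [<-|[]].
have ub : (sep_number SQ D sh n eps <= (1 + Mb * (n + 2 * Mb))%N%:R%:E)%E.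
  apply: ge_ereal_sup => _ [E sE <-]; rewrite lee_fin ler_nat; exact: sep_size.
move: lb ub; case: sep_number => [r| |] //= lb ub.
by exists r; rewrite -!lee_fin.
Qed.

Lemma part1_eps : limn_esup (growth_term SQ D sh eps) = 0%E.
Proof.
apply: limsup_eq0.
  move=> m; rewrite /growth_term; have [r [-> [r1 _]]] := sepnum_bounds m.
  by rewrite lee_fin divr_ge0 // ln_ge0.
move=> d d0; have [N HN] := ln_growth (Mb * (2 * Mb + 1)) d0.
exists (maxn N 1) => m hm.
rewrite /growth_term; have [r [-> [r1 rB]]] := sepnum_bounds m.
rewrite lee_fin.
have m0 : (0 < m)%N by lia.
rewrite ler_pdivrMr ?ltr0n //.
apply: (@le_trans _ _ (ln ((Mb * (2 * Mb + 1)).+1 * m.+1)%N%:R)); last first.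
  by apply: HN; lia.
rewrite ler_ln ?posrE ?ltr0n ?muln_gt0 //; last by apply: lt_le_trans r1.
by apply: le_trans rB _; rewrite ler_nat; nia.
Qed.

End Eps.

Lemma part1 : top_entropy SQ D sh = 0%E.
Proof.
rewrite /top_entropy; apply/eqP; rewrite eq_le; apply/andP; split.
  by apply: ge_ereal_sup => _ [e e0 <-]; rewrite (part1_eps e0).
apply: ereal_sup_ubound; exists 1; first exact: ltr01.
by rewrite (part1_eps (ltr01 : (0:R) < 1)).
Qed.

End P1.

Unset Implicit Arguments.

Theorem proposition5p10 (R : realType) :
  top_entropy (@S_Q R) (@Dmetric R) (@Qshift R) = 0%E /\
  top_entropy (hyperspace (@S_Q R) (@Dmetric R))
    (hausdorff (@Dmetric R)) (fun A => (@Qshift R) @` A) = +oo%E.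
Proof. exact: (conj (@part1 R) (@part2 R)). Qed.
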